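(* Let $m$ and $k$ be positive integers with $m\le k-2$. Let $G$ be an inflator graph of order $k$ with drop $m$ and distinguished vertex set $\{a,b\}$. Let $H$ be the graph obtained from $G$ by adding a new vertex $x$ and the two edges $ax$ and $bx$. Then $H$ is nonhamiltonian and homogeneously traceable.
   Context: All graphs are finite and simple; the order of a path is its number of vertices. For vertices $u,v$ of $G$, $\tau_G(u,v)$ is the order of a longest path in $G$ with endvertices $u$ and $v$. Let $G$ be a graph of order $k\ge 3$ and $m\le k-2$ a positive integer. $G$ is an inflator graph with drop $m$ if it has two distinguished vertices $a,b$ such that: (D-1) $\tau_G(a,b)=k-m$; (D-2) each distinguished vertex is an endvertex of a path in $G$ containing all vertices of $G$ except the other distinguished vertex; (D-3) $G$ has a hamiltonian path starting at each distinguished vertex; (D-4) for every $v\in V(G)\setminus\{a,b\}$ there are a path $P$ from $v$ to one distinguished vertex and a path $Q$ having the other distinguished vertex as an endvertex (possibly $Q$ is that single vertex) such that $V(P)\cap V(Q)=\emptyset$ and $V(P)\cup V(Q)=V(G)$. A graph is homogeneously traceable if every vertex is an endvertex of a hamiltonian path; it is nonhamiltonian if it has no hamiltonian cycle. *)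

(* Defs.v *)
From mathcomp Require Import all_boot.
Set Implicit Arguments. Unset Strict Implicit. Unset Printing Implicit Defensive.

(* A path is a nonempty duplicate-free sequence of
   vertices, consecutive ones adjacent; its order is its size. *)
Section Graphs.
Variable T : finType.
Variable e : rel T.

Definition simple_graph := symmetric e /\ irreflexive e.

Definition gpath (p : seq T) : bool :=
  if p is x :: s then path e x s && uniq p else false.

Definition gpath_between (p : seq T) (u v : T) : Prop :=
  gpath p /\ head u p = u /\ last u p = v.

Definition endvertex (u : T) (p : seq T) : bool :=
  (head u p == u) || (last u p == u).

Definition tau_is (u v : T) (n : nat) : Prop :=
  (exists p, gpath_between p u v /\ size p = n) /\
  (forall p, gpath_between p u v -> size p <= n).

Definition hamiltonian_path (p : seq T) : Prop :=
  gpath p /\ forall z, z \in p.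

Definition hamiltonian_cycle (p : seq T) : Prop :=
  [/\ uniq p, cycle e p, 3 <= size p & forall z, z \in p].

Definition hamiltonian : Prop := exists p, hamiltonian_cycle p.

Definition homogeneously_traceable : Prop :=
  forall v, exists p, hamiltonian_path p /\ endvertex v p.

Definition inflator_D4_side (v a b : T) : Prop :=
  exists P Q, [/\ gpath_between P v a, gpath Q, endvertex b Q,
    [disjoint P & Q] & forall z, (z \in P) || (z \in Q)].

Definition inflator (m : nat) (a b : T) : Prop :=
  [/\ a != b,
      (* D-1 *) tau_is a b (#|T| - m),
      (* D-2 *) (exists p, [/\ gpath p, endvertex a p &
                    forall z, (z \in p) = (z != b)]) /\
                (exists p, [/\ gpath p, endvertex b p &
                    forall z, (z \in p) = (z != a)]),
      (* D-3 *) (exists p, hamiltonian_path p /\ endvertex a p) /\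
                (exists p, hamiltonian_path p /\ endvertex b p) &
      (* D-4 *) forall v, v != a -> v != b ->
                  inflator_D4_side v a b \/ inflator_D4_side v b a].

End Graphs.

(* The graph obtained by adding a new vertex x (= None) adjacent to a and b. *)
Definition add_vertex_ab (T : finType) (e : rel T) (a b : T) : rel (option T) :=
  fun u v => match u, v with
  | Some u, Some v => e u v
  | None, Some w | Some w, None => (w == a) || (w == b)
  | None, None => false
  end.

(* Main.v *)
Require Import Defs.
From mathcomp Require Import all_boot zify.
Set Implicit Arguments. Unset Strict Implicit. Unset Printing Implicit Defensive.

Lemma path_map_some (T : finType) (e : rel T) a b x s :
  path (add_vertex_ab e a b) (Some x) (map Some s) = path e x s.
Proof. by elim: s x => //= y s IH x; rewrite IH. Qed.

Lemma none_notin_map (T : finType) (s : seq T) : (None \in map Some s) = false.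
Proof. by apply/negbTE/negP => /mapP [? _]. Qed.

Lemma orient (T : finType) (e : rel T) p u : symmetric e -> gpath e p ->
  endvertex u p -> exists s, [/\ path e u s, uniq (u :: s) & (u :: s) =i p].
Proof.
move=> sym; case: p => [|x s] //= /andP[ps us]; rewrite /endvertex /=.
case/orP=> /eqP <-; first by exists s.
exists (rev (belast x s)).
have E: last x s :: rev (belast x s) = rev (x :: s) by rewrite [x :: s]lastI rev_rcons.
split; first by rewrite rev_path (@eq_path _ _ e) // => y z; exact: sym.
  by rewrite -[_ && _]/(uniq (last x s :: rev (belast x s))) E rev_uniq /= us.
by move=> z; rewrite E mem_rev.
Qed.

Lemma none_free (T : finType) (s : seq (option T)) :
  None \notin s -> s = map Some (pmap id s).
Proof.
elim: s => [|[y|] s IH] // H.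
by rewrite /= -IH //; move: H; rewrite inE.
Qed.

Lemma build_v (T : finType) (e : rel T) a b a' b' v P Q :
  symmetric e -> (a' == a) || (a' == b) -> (b' == a) || (b' == b) ->
  gpath_between e P v a' -> gpath e Q -> endvertex b' Q -> [disjoint P & Q] ->
  (forall z, (z \in P) || (z \in Q)) ->
  exists p, hamiltonian_path (add_vertex_ab e a b) p /\ endvertex (Some v) p.
Proof.
move=> sym ha hb [gP [hP lP]] gQ eQ dPQ cov.
have [q [pq uq mq]] := orient sym gQ eQ.
case: P gP hP lP dPQ cov => [|y s] // /andP [ps us] /= hP lP dPQ cov.
subst y.
set p := Some v :: map Some s ++ None :: map Some (b' :: q).
have pp : perm_eq p (None :: map Some ((v :: s) ++ (b' :: q))).
  rewrite /p map_cat.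
  have -> : Some v :: map Some s ++ None :: map Some (b' :: q) =
    map Some (v :: s) ++ [:: None] ++ map Some (b' :: q) by [].
  by rewrite perm_catCA.
exists p; split; last by rewrite /endvertex /= eqxx.
split.
  have U : uniq (None :: map Some ((v :: s) ++ (b' :: q))).
    rewrite cons_uniq none_notin_map (map_inj_uniq (@Some_inj _)) cat_uniq us uq andbT.
    apply/hasPn => z zq; apply/negP => zP.
    have zQ : z \in Q by rewrite -mq.
    by rewrite (disjointFr dPQ zP) in zQ.
  rewrite /gpath -/p (perm_uniq pp) U /p andbT.
  rewrite cat_path path_map_some ps /= last_map lP hb path_map_some pq.
  by rewrite /= ha.
case=> [z|]; rewrite (perm_mem pp) // inE /=.
rewrite -[Some v :: _]/(map Some (v :: s ++ b' :: q)) mem_map; last exact: Some_inj.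
by rewrite -cat_cons mem_cat mq.
Qed.

Lemma build_end (T : finType) (e : rel T) a b u w p :
  symmetric e -> (u == a) || (u == b) -> (w == a) || (w == b) ->
  gpath e p -> endvertex w p -> (forall z, (z \in p) = (z != u)) ->
  exists p, hamiltonian_path (add_vertex_ab e a b) p /\ endvertex (Some u) p.
Proof.
move=> sym hu hw gp ep cov.
have [s [ps us ms]] := orient sym gp ep.
exists (Some u :: None :: map Some (w :: s)); split; last by rewrite /endvertex /= eqxx.
split.
  have U : uniq (map Some (w :: s)) by rewrite (map_inj_uniq (@Some_inj _)).
  have Nu : Some u \notin map Some (w :: s).
    by rewrite mem_map ?ms ?cov ?eqxx //; exact: Some_inj.
  rewrite /gpath; apply/andP; split; first by rewrite /= hu hw path_map_some ps.
  by rewrite cons_uniq inE negb_or Nu cons_uniq none_notin_map U.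
case=> [z|]; last by rewrite in_cons in_cons eqxx orbT.
case: (z =P u) => [->|/eqP nz]; first by rewrite in_cons eqxx.
have zin : Some z \in map Some (w :: s) by rewrite mem_map ?ms ?cov //; exact: Some_inj.
by rewrite in_cons in_cons zin !orbT.
Qed.


Lemma nonham (T : finType) (e : rel T) (m : nat) (a b : T) :
  symmetric e -> tau_is e a b (#|T| - m) -> 0 < m -> 1 < #|T| ->
  ~ hamiltonian (add_vertex_ab e a b).
Proof.
move=> sym [_ tau] m0 k2 [c [uc cc sc cov]].
have k0 : 0 < #|T| by apply: leq_trans k2.
have sc' : size c = #|T|.+1.
  by rewrite -(card_uniqP uc) -card_option (eq_cardT (A := mem c)) ?cardT.
have Nc : None \in c := cov None.
case/splitPr: Nc uc cc sc sc' cov => c1 c2 uc cc sc sc' cov.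
have cd : cycle (add_vertex_ab e a b) (None :: (c2 ++ c1)).
  by rewrite -(rot_cycle (size c1)) rot_size_cat in cc.
have ud : uniq (None :: (c2 ++ c1)).
  by rewrite -(rot_uniq (size c1)) rot_size_cat in uc.
have sd : size (c2 ++ c1) = #|T|.
  by move: sc'; rewrite !size_cat /= addnC addSn => -[].
move: ud; rewrite cons_uniq => /andP[Nd ud].
move: cd sd ud; rewrite (none_free Nd); case: (pmap id (c2 ++ c1)) => [|x t'].
  by move=> _ /= E; rewrite -E in k0.
move=> cd st0 ut0.
have ut : uniq (x :: t') by rewrite -(map_inj_uniq (@Some_inj _)).
have st : size (x :: t') = #|T| by rewrite -(size_map Some).
clear ut0 st0.
move: cd => /= /andP[hx].
rewrite rcons_path path_map_some last_map => /andP[pt hl].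
have xl : x != last x t'.
  case: t' pt hl st ut => [|y t''] pt hl st ut.
    by move: st k2 => /= <-.
  move: ut; rewrite cons_uniq => /andP[xn _]; apply/eqP => E.
  by move: xn; rewrite E [last _ _]/= mem_last.
case: (x =P a) => [xa|/eqP xa].
  have lb : last x t' = b.
    by move: hl xl; rewrite /= xa; case/orP=> /eqP ->; rewrite ?eqxx.
  have H : size (x :: t') <= #|T| - m.
    apply: tau; split; [rewrite /gpath -[_ && _]/(path e x t' && uniq (x :: t')) pt ut // | by rewrite /= lb xa].
  rewrite st in H; lia.
have xb : x = b by move: hx xa; rewrite /= => /orP[/eqP->|/eqP->]; rewrite ?eqxx.
have la : last x t' = a.
  by move: hl xl; rewrite /= xb; case/orP=> /eqP ->; rewrite ?eqxx.
have E : last x t' :: rev (belast x t') = rev (x :: t') by rewrite [x :: t']lastI rev_rcons.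
have H : size (rev (x :: t')) <= #|T| - m.
  apply: tau; split.
    rewrite -E /gpath -[_ && _]/(path e (last x t') (rev (belast x t')) && uniq (last x t' :: rev (belast x t'))).
    rewrite E rev_uniq ut andbT rev_path (@eq_path _ _ e) // => y z; exact: sym.
  by split; [rewrite -E /= la | rewrite rev_cons last_rcons xb].
rewrite size_rev st in H; lia.
Qed.

Theorem theorem2p22 (T : finType) (e : rel T) (m k : nat) (a b : T) :
  simple_graph e -> #|T| = k -> 3 <= k -> 0 < m -> m <= k - 2 ->
  inflator e m a b ->
  ~ hamiltonian (add_vertex_ab e a b) /\
  homogeneously_traceable (add_vertex_ab e a b).
Proof.
move=> [sym irr] hk k3 m0 mk [ab tau [[p1 [g1 e1 c1]] [p2 [g2 e2 c2]]] [[p3 [h3 e3]] _] D4].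
have haa : (a == a) || (a == b) by rewrite eqxx.
have hbb : (b == a) || (b == b) by rewrite eqxx orbT.
split.
  by apply: (nonham sym tau m0); rewrite hk; apply: leq_trans k3.
case=> [v|].
  case: (v =P a) => [->|/eqP va].
    exact: (build_end sym haa hbb g2 e2 c2).
  case: (v =P b) => [->|/eqP vb].
    exact: (build_end sym hbb haa g1 e1 c1).
  case: (D4 v va vb) => [[P [Q [gP gQ eQ dPQ cov]]]|[P [Q [gP gQ eQ dPQ cov]]]].
    exact: (build_v sym haa hbb gP gQ eQ dPQ cov).
  exact: (build_v sym hbb haa gP gQ eQ dPQ cov).
case: h3 => g3 c3.
have [s [ps us ms]] := orient sym g3 e3.
exists (None :: map Some (a :: s)); split; last by rewrite /endvertex /= ?eqxx.
split.
  rewrite /gpath; apply/andP; split; first by rewrite /= eqxx path_map_some ps.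
  by rewrite cons_uniq none_notin_map (map_inj_uniq (@Some_inj _)).
case=> [z|]; last by rewrite in_cons eqxx.
have zin : Some z \in map Some (a :: s) by rewrite mem_map ?ms //; exact: Some_inj.
by rewrite in_cons zin orbT.
Qed.
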